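(* Let $M\ge4$. If a coarsely bottlenecked graph $G$ has a skeleton $G_{\lambda,k}$ such that $G_{(\lambda,k)_{(2,2)}}$ contains an $M$-fat $H$ minor, then $G_{\lambda,k}$ contains an $(M+\frac M2-2)$-fat $H$ minor.
   Context: All graphs are connected (and unbounded); $d$ is the graph metric. Sets $X,Y$ are $r$-disjoint if $d(a,b)>r$ for all $a\in X,b\in Y$; $X$ is $k$-connected if any two of its points are joined by a finite sequence in $X$ with consecutive distances $\le k$; $N_r(S)=\{y:d(s,y)<r\text{ for some }s\in S\}$. $G$ is $M$-fat $n$-bottlenecked if for any two connected $M$-disjoint subgraphs $X,Y$ there is $S\subset V(G)\setminus(V(X)\cup V(Y))$, $|S|=n$, such that every path from $X$ to $Y$ meets $N_M(S)$; coarsely bottlenecked means this holds for some $M,n$. $H$ is an $M$-fat minor of a graph $\Gamma$ if there are connected subgraphs $B_v$ ($v\in V(H)$) and paths $P_e$ ($e\in E(H)$), $P_e$ joining $B_u$ to $B_v$ for $e=uv$, any two of which are $M$-disjoint unless they correspond to an incident vertex–edge pair of $H$. Skeleton $\Gamma_{\lambda,k}$ of a connected graph $\Gamma$ (root $x_0$, scale $\lambda\ge1$, connectivity $k\ge1$): layers $A_{N,\lambda}=\{x: N\lambda<d(x,x_0)\le(N+1)\lambda\}$, $N\in\mathbb Z$; blocks are maximal $k$-connected subsets of layers; $\Gamma_{\lambda,k}$ has a vertex per block and an edge between two blocks iff an edge of $\Gamma$ joins them. $G_{(\lambda,k)_{(2,2)}}$ is the $(2,2)$-skeleton of the graph $G_{\lambda,k}$,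 rooted at the block containing the root of $G$. *)

(* Defs.v *)
From Stdlib Require Import Reals List ZArith.
Import ListNotations.
Open Scope R_scope.

Record Graph := mkGraph { vtx : Type; adj : vtx -> vtx -> Prop }.

Fixpoint chain {T : Type} (Rel : T -> T -> Prop) (x : T) (l : list T) : Prop :=
  match l with
  | nil => True
  | y :: l' => Rel x y /\ chain Rel y l'
  end.

Definition walk_n (g : Graph) (x y : vtx g) (n : nat) : Prop :=
  exists l, chain (adj g) x l /\ length l = n /\ last l x = y.

Definition is_dist (g : Graph) (x y : vtx g) (n : nat) : Prop :=
  walk_n g x y n /\ forall m, walk_n g x y m -> (n <= m)%nat.

Definition dist_gt (g : Graph) (x y : vtx g) (r : R) : Prop :=
  exists n, is_dist g x y n /\ r < INR n.
Definition dist_lt (g : Graph) (x y : vtx g) (r : R) : Prop :=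
  exists n, is_dist g x y n /\ INR n < r.
Definition dist_le (g : Graph) (x y : vtx g) (r : R) : Prop :=
  exists n, is_dist g x y n /\ INR n <= r.

Definition symmetric_graph (g : Graph) : Prop :=
  forall x y, adj g x y -> adj g y x.
Definition loopless (g : Graph) : Prop := forall x, ~ adj g x x.
Definition connected_graph (g : Graph) : Prop :=
  forall x y, exists n, walk_n g x y n.
Definition unbounded_graph (g : Graph) : Prop :=
  forall r : R, exists x y, dist_gt g x y r.

Definition rdisjoint (g : Graph) (r : R) (X Y : vtx g -> Prop) : Prop :=
  forall a b, X a -> Y b -> dist_gt g a b r.

Definition kconnected (g : Graph) (k : R) (X : vtx g -> Prop) : Prop :=
  forall a b, X a -> X b ->
    exists l, chain (fun u v => X v /\ dist_le g u v k) a l /\ last l a = b.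

Definition conn_set (g : Graph) (X : vtx g -> Prop) : Prop :=
  (exists x, X x) /\
  forall a b, X a -> X b ->
    exists l, chain (fun u v => adj g u v /\ X v) a l /\ last l a = b.

Definition nbhd (g : Graph) (r : R) (S : vtx g -> Prop) (y : vtx g) : Prop :=
  exists s, S s /\ dist_lt g s y r.

Definition path_between (g : Graph) (X Y : vtx g -> Prop) (p : list (vtx g)) : Prop :=
  match p with
  | nil => False
  | x :: l => chain (adj g) x l /\ X x /\ Y (last l x)
  end.

Definition inL {T : Type} (p : list T) : T -> Prop := fun z => In z p.

Definition bottlenecked (g : Graph) (M : R) (n : nat) : Prop :=
  forall X Y : vtx g -> Prop,
    conn_set g X -> conn_set g Y -> rdisjoint g M X Y ->
    exists S : list (vtx g),
      NoDup S /\ length S = n /\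
      (forall s, In s S -> ~ X s /\ ~ Y s) /\
      forall p, path_between g X Y p ->
        exists z, In z p /\ nbhd g M (inL S) z.

Definition coarsely_bottlenecked (g : Graph) : Prop :=
  exists (M : R) (n : nat), bottlenecked g M n.

(* H is an M-fat minor of G; H is a simple graph, the path for the edge uv is
   P u v, with P v u its reverse. *)
Definition fat_minor (G H : Graph) (M : R) : Prop :=
  exists (B : vtx H -> vtx G -> Prop) (P : vtx H -> vtx H -> list (vtx G)),
    (forall v, conn_set G (B v)) /\
    (forall u v, adj H u v ->
        P v u = rev (P u v) /\ path_between G (B u) (B v) (P u v)) /\
    (forall u w, u <> w -> rdisjoint G M (B u) (B w)) /\
    (forall u v u' v', adj H u v -> adj H u' v' ->
        ~ ((u = u' /\ v = v') \/ (u = v' /\ v = u')) ->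
        rdisjoint G M (inL (P u v)) (inL (P u' v'))) /\
    (forall w u v, adj H u v -> w <> u -> w <> v ->
        rdisjoint G M (B w) (inL (P u v))).

Definition layer (g : Graph) (x0 : vtx g) (lam : R) (N : Z) (x : vtx g) : Prop :=
  exists n, is_dist g x x0 n /\ IZR N * lam < INR n /\ INR n <= (IZR N + 1) * lam.

Definition is_block (g : Graph) (x0 : vtx g) (lam k : R) (B : vtx g -> Prop) : Prop :=
  (exists x, B x) /\
  exists N : Z,
    (forall x, B x -> layer g x0 lam N x) /\ kconnected g k B /\
    forall B' : vtx g -> Prop,
      (forall x, B' x -> layer g x0 lam N x) -> kconnected g k B' ->
      (forall x, B x -> B' x) -> forall x, B' x -> B x.

Definition skeleton (g : Graph) (x0 : vtx g) (lam k : R) : Graph :=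
  mkGraph {B : vtx g -> Prop | is_block g x0 lam k B}
    (fun b b' => proj1_sig b <> proj1_sig b' /\
       exists x y, proj1_sig b x /\ proj1_sig b' y /\ adj g x y).

(* Main.v *)
Require Import Defs.
From Stdlib Require Import Reals List ZArith Lia Lra Classical ClassicalEpsilon FunctionalExtensionality PropExtensionality ProofIrrelevance.
Import ListNotations.
Open Scope R_scope.

Lemma last_cons_d {T : Type} (z : T) (l : list T) (d : T) : last (z::l) d = last l z.
Proof.
  revert z d. induction l as [|w l IH]; intros z d; [reflexivity|].
  change (last (w::l) d = last (w::l) z). rewrite !IH. reflexivity.
Qed.

Lemma last_app_d {T : Type} (l1 l2 : list T) (x : T) : last (l1 ++ l2) x = last l2 (last l1 x).
Proof.
  revert x. induction l1 as [|y l1 IH]; intros x; [reflexivity|].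
  rewrite <- app_comm_cons, !last_cons_d. apply IH.
Qed.

Lemma chain_app {T : Type} (Rl : T -> T -> Prop) x l1 l2 :
  chain Rl x (l1 ++ l2) <-> chain Rl x l1 /\ chain Rl (last l1 x) l2.
Proof.
  revert x. induction l1 as [|y l1 IH]; intros x.
  - simpl. tauto.
  - rewrite <- app_comm_cons, last_cons_d. simpl. rewrite IH. tauto.
Qed.

Lemma chain_inv {T : Type} (Rl R' : T -> T -> Prop) (P : T -> Prop) :
  (forall u v, P u -> Rl u v -> R' u v /\ P v) ->
  forall l x, P x -> chain Rl x l -> chain R' x l /\ (forall z, In z l -> P z).
Proof.
  intros HI l. induction l as [|y l IH]; intros x Px Hc; simpl in *.
  - split; [exact I| tauto].
  - destruct Hc as [H1 H2]. destruct (HI _ _ Px H1) as [H3 H4].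
    destruct (IH y H4 H2) as [H5 H6]. split; [tauto|].
    intros z [<-|Hz]; auto.
Qed.

Definition creach {T : Type} (Rl : T -> T -> Prop) (a b : T) : Prop :=
  exists l, chain Rl a l /\ last l a = b.

Lemma creach_refl {T : Type} (Rl : T -> T -> Prop) a : creach Rl a a.
Proof. exists nil; simpl; auto. Qed.

Lemma creach_step {T : Type} (Rl : T -> T -> Prop) a b : Rl a b -> creach Rl a b.
Proof. intros; exists [b]; simpl; auto. Qed.

Lemma creach_trans {T : Type} (Rl : T -> T -> Prop) a b c :
  creach Rl a b -> creach Rl b c -> creach Rl a c.
Proof.
  intros [l1 [H1 E1]] [l2 [H2 E2]]. exists (l1 ++ l2). split.
  - apply chain_app. subst. tauto.
  - rewrite last_app_d. subst. reflexivity.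
Qed.

Lemma creach_inv {T : Type} (Rl R' : T -> T -> Prop) (P : T -> Prop) a b :
  (forall u v, P u -> Rl u v -> R' u v /\ P v) -> P a -> creach Rl a b -> creach R' a b.
Proof.
  intros HI Pa [l [Hc E]]. exists l. split; auto.
  exact (proj1 (chain_inv Rl R' P HI l a Pa Hc)).
Qed.

Lemma creach_sym {T : Type} (Rl : T -> T -> Prop) :
  (forall u v, Rl u v -> Rl v u) -> forall a b, creach Rl a b -> creach Rl b a.
Proof.
  intros Hs a b [l [Hc E]]. revert a Hc E. induction l as [|y l IH]; intros a Hc E.
  - simpl in E. subst. apply creach_refl.
  - destruct Hc as [H1 H2]. rewrite last_cons_d in E.
    apply creach_trans with y; [apply IH; auto| apply creach_step; auto].
Qed.

Lemma walk_app (g : Graph) x y z n m :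
  walk_n g x y n -> walk_n g y z m -> walk_n g x z (n + m).
Proof.
  intros [l1 [H1 [L1 E1]]] [l2 [H2 [L2 E2]]]. exists (l1 ++ l2). split; [|split].
  - apply chain_app. subst. tauto.
  - rewrite length_app. lia.
  - rewrite last_app_d. subst. reflexivity.
Qed.

Lemma walk_0 (g : Graph) x : walk_n g x x 0.
Proof. exists nil; simpl; auto. Qed.

Lemma walk_1 (g : Graph) x y : adj g x y -> walk_n g x y 1.
Proof. intros; exists [y]; simpl; auto. Qed.

Lemma walk_0_eq (g : Graph) x y : walk_n g x y 0 -> x = y.
Proof. intros [l [_ [L E]]]. destruct l; simpl in *; [auto|lia]. Qed.

Lemma walk_S_inv (g : Graph) x y n : walk_n g x y (S n) -> exists w, adj g x w /\ walk_n g w y n.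
Proof.
  intros [l [Hc [L E]]]. destruct l as [|w l]; simpl in L; [lia|].
  destruct Hc as [H1 H2]. exists w. split; auto. exists l. rewrite last_cons_d in E.
  split; auto.
Qed.

Lemma walk_sym (g : Graph) : symmetric_graph g -> forall n x y, walk_n g x y n -> walk_n g y x n.
Proof.
  intros Hs n. induction n as [|n IH]; intros x y Hw.
  - apply walk_0_eq in Hw. subst. apply walk_0.
  - apply walk_S_inv in Hw. destruct Hw as [w [Ha Hw]].
    replace (S n) with (n + 1)%nat by lia. apply walk_app with w; auto.
    apply walk_1. apply Hs; auto.
Qed.

Lemma walk_min (g : Graph) x y m : walk_n g x y m -> exists n, is_dist g x y n /\ (n <= m)%nat.
Proof.
  induction m as [m IH] using (well_founded_induction lt_wf). intros Hw.
  destruct (classic (exists m', (m' < m)%nat /\ walk_n g x y m')) as [[m' [Hlt Hw']]|Hn].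
  - destruct (IH m' Hlt Hw') as [n [Hd Hle]]. exists n. split; auto. lia.
  - exists m. split; [split; auto|lia]. intros m'' Hw''.
    destruct (Nat.lt_ge_cases m'' m); auto. exfalso; apply Hn; eauto.
Qed.

Lemma is_dist_unique (g : Graph) x y n n' : is_dist g x y n -> is_dist g x y n' -> n = n'.
Proof. intros [H1 H2] [H3 H4]. specialize (H2 _ H3). specialize (H4 _ H1). lia. Qed.

Lemma is_dist_sym (g : Graph) : symmetric_graph g -> forall x y n, is_dist g x y n -> is_dist g y x n.
Proof.
  intros Hs x y n [H1 H2]. split; [apply walk_sym; auto|].
  intros m Hm. apply H2. apply walk_sym; auto.
Qed.

Lemma dist_le_sym (g : Graph) : symmetric_graph g -> forall x y r, dist_le g x y r -> dist_le g y x r.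
Proof. intros Hs x y r [n [H1 H2]]. exists n. split; auto. apply is_dist_sym; auto. Qed.

Lemma walk_dist_le (g : Graph) x y n : walk_n g x y n -> (n <= 2)%nat -> dist_le g x y 2.
Proof.
  intros Hw Hn. destruct (walk_min _ _ _ _ Hw) as [d [Hd Hle]]. exists d. split; auto.
  apply le_INR in Hle. apply le_INR in Hn. simpl in Hn. lra.
Qed.

Lemma layer_iff (g : Graph) r0 N x :
  layer g r0 2 N x <-> exists n, is_dist g x r0 n /\ (2*N < Z.of_nat n <= 2*N+2)%Z.
Proof.
  unfold layer. split; intros [n [Hd Hr]]; exists n; split; auto.
  - rewrite INR_IZR_INZ in Hr. destruct Hr as [H1 H2].
    replace (IZR N * 2) with (IZR (2*N)) in H1 by (rewrite mult_IZR; lra).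
    replace ((IZR N + 1) * 2) with (IZR (2*N+2)) in H2 by (rewrite plus_IZR, mult_IZR; lra).
    apply lt_IZR in H1. apply le_IZR in H2. lia.
  - rewrite INR_IZR_INZ. destruct Hr as [H1 H2].
    apply IZR_lt in H1. apply IZR_le in H2.
    rewrite mult_IZR in H1. rewrite plus_IZR, mult_IZR in H2. lra.
Qed.

Lemma layer_unique (g : Graph) r0 N N' x : layer g r0 2 N x -> layer g r0 2 N' x -> N = N'.
Proof.
  rewrite !layer_iff. intros [n [H1 H2]] [n' [H3 H4]].
  pose proof (is_dist_unique _ _ _ _ _ H1 H3). subst. lia.
Qed.

Definition Rx (g : Graph) (X : vtx g -> Prop) (u v : vtx g) : Prop :=
  X u /\ X v /\ dist_le g u v 2.

Lemma Rx_sym (g : Graph) X : symmetric_graph g -> forall u v, Rx g X u v -> Rx g X v u.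
Proof. intros Hs u v [A [B C]]. split; [|split]; auto. apply dist_le_sym; auto. Qed.

Lemma kconn_creach (g : Graph) X a b : kconnected g 2 X -> X a -> X b -> creach (Rx g X) a b.
Proof.
  intros Hk Xa Xb. destruct (Hk a b Xa Xb) as [l [Hc E]].
  apply creach_inv with (Rl := fun u v => X v /\ dist_le g u v 2) (P := X); auto.
  - intros u v Pu [H1 H2]. split; [split; [|split]|]; auto.
  - exists l; auto.
Qed.

Lemma creach_kconn (g : Graph) X :
  (forall a b, X a -> X b -> creach (Rx g X) a b) -> kconnected g 2 X.
Proof.
  intros Hc a b Xa Xb. destruct (creach_inv (Rx g X) (fun u v => X v /\ dist_le g u v 2) X a b)
    as [l [H1 H2]]; eauto.
  intros u v Pu [A [B C]]. auto.
Qed.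

Lemma creach_mono {T : Type} (R1 R2 : T -> T -> Prop) a b :
  (forall u v, R1 u v -> R2 u v) -> creach R1 a b -> creach R2 a b.
Proof.
  intros Hm Hc. apply creach_inv with (Rl := R1) (P := fun _ => True); auto.
Qed.

Lemma block_union (g : Graph) r0 (Hs : symmetric_graph g) b1 b2 a z N :
  is_block g r0 2 2 b1 -> is_block g r0 2 2 b2 -> b1 a -> b2 z -> dist_le g a z 2 ->
  layer g r0 2 N a -> layer g r0 2 N z -> forall x, b2 x -> b1 x.
Proof.
  intros [_ [N1 [L1 [K1 M1]]]] [_ [N2 [L2 [K2 M2]]]] Ha Hz Hd La Lz.
  pose proof (layer_unique _ _ _ _ _ (L1 a Ha) La). subst N1.
  pose proof (layer_unique _ _ _ _ _ (L2 z Hz) Lz). subst N2.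
  set (U := fun x => b1 x \/ b2 x).
  assert (Hto : forall p, U p -> creach (Rx g U) p a).
  { intros p [Hp|Hp].
    - apply creach_mono with (Rx g b1). { intros u v [A [B C]]; split; [left|split; [left|]]; auto. }
      apply kconn_creach; auto.
    - apply creach_trans with z.
      + apply creach_mono with (Rx g b2). { intros u v [A [B C]]; split; [right|split; [right|]]; auto. }
        apply kconn_creach; auto.
      + apply creach_step. split; [right|split; [left|]]; auto. apply dist_le_sym; auto. }
  intros x Hx. apply (M1 U).
  - intros y [Hy|Hy]; auto.
  - apply creach_kconn. intros p q Hp Hq. apply creach_trans with a; auto.
    apply creach_sym; [apply Rx_sym; auto|]. auto.
  - intros y Hy; left; auto.
  - right; auto.
Qed.

Lemma block_exists (g : Graph) r0 (Hs : symmetric_graph g) x n :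
  walk_n g x r0 n -> exists B, is_block g r0 2 2 B /\ B x.
Proof.
  intros Hw. destruct (walk_min _ _ _ _ Hw) as [r [Hd _]].
  set (N := ((Z.of_nat r + 1) / 2 - 1)%Z).
  assert (Lx : layer g r0 2 N x).
  { apply layer_iff. exists r. split; auto. unfold N. Z.to_euclidean_division_equations; lia. }
  set (L := layer g r0 2 N).
  set (C := fun y => L y /\ creach (Rx g L) x y).
  exists C. split.
  - split; [exists x; split; auto; apply creach_refl|]. exists N. split; [|split].
    + intros y [Hy _]; auto.
    + apply creach_kconn. intros a b [La Ca] [Lb Cb].
      apply creach_inv with (Rl := Rx g L) (P := C).
      * intros u v Cu Ruv. destruct Cu as [Lu Cu]. destruct Ruv as [A [B D]].
        assert (Cv : C v). { split; auto. apply creach_trans with u; auto. apply creach_step. split; auto. }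
        split; auto. split; [split; auto|split; auto].
      * split; auto.
      * apply creach_trans with x; auto. apply creach_sym; auto. apply Rx_sym; auto.
    + intros B' HL HK HC y Hy. split; [apply HL; auto|].
      apply creach_mono with (Rx g B').
      { intros u v [A [B D]]. split; [apply HL; auto|split; [apply HL; auto|auto]]. }
      apply kconn_creach; auto. apply HC. split; auto. apply creach_refl.
  - split; auto. apply creach_refl.
Qed.

Lemma blk_eq (g : Graph) r0 (b b' : vtx (skeleton g r0 2 2)) :
  (forall x, proj1_sig b x -> proj1_sig b' x) -> (forall x, proj1_sig b' x -> proj1_sig b x) -> b = b'.
Proof.
  intros H1 H2. apply eq_sig_hprop; [intros; apply proof_irrelevance|].
  apply functional_extensionality. intros x. apply propositional_extensionality. split; auto.
Qed.

Lemma step1 (g : Graph) r0 (b1 bx : vtx (skeleton g r0 2 2)) a x :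
  proj1_sig b1 a -> proj1_sig bx x -> adj g a x ->
  exists n, walk_n (skeleton g r0 2 2) b1 bx n /\ (n <= 1)%nat.
Proof.
  intros Ha Hx Hadj. destruct (classic (proj1_sig b1 = proj1_sig bx)) as [E|E].
  - exists 0%nat. split; auto. assert (b1 = bx).
    { apply blk_eq; intros y; rewrite E; auto. } subst. apply walk_0.
  - exists 1%nat. split; auto. apply walk_1. simpl. split; auto. exists a, x; auto.
Qed.

Lemma blk_layer (g : Graph) r0 (b : vtx (skeleton g r0 2 2)) a :
  proj1_sig b a -> exists N, forall y, proj1_sig b y -> layer g r0 2 N y.
Proof.
  intros _. destruct (proj2_sig b) as [_ [N [L _]]]. eauto.
Qed.

Lemma dist_adj_bound (g : Graph) (Hs : symmetric_graph g) r0 a x ra rx :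
  adj g a x -> is_dist g a r0 ra -> is_dist g x r0 rx -> (rx <= S ra)%nat.
Proof.
  intros Hadj [Wa _] [_ Mx]. apply Mx. replace (S ra) with (1 + ra)%nat by lia.
  apply walk_app with a; auto. apply walk_1; apply Hs; auto.
Qed.

Lemma step2 (g : Graph) r0 (Hs : symmetric_graph g) (b1 b2 : vtx (skeleton g r0 2 2)) a x z :
  proj1_sig b1 a -> proj1_sig b2 z -> adj g a x -> adj g x z ->
  exists n, walk_n (skeleton g r0 2 2) b1 b2 n /\ (n <= 1)%nat.
Proof.
  intros Ha Hz Hax Hxz.
  destruct (proj2_sig b1) as [_ [N1 [L1 _]]]. destruct (proj2_sig b2) as [_ [N2 [L2 _]]].
  pose proof (L1 a Ha) as La. pose proof (L2 z Hz) as Lz.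
  assert (Hwx : exists n, walk_n g x r0 n).
  { apply layer_iff in Lz. destruct Lz as [rz [[Wz _] _]]. eexists. apply walk_app with z; [apply walk_1; eauto| eauto]. }
  destruct Hwx as [nx Hwx]. destruct (block_exists g r0 Hs x nx Hwx) as [Bx [HBx Hx]].
  set (bx := exist _ Bx HBx : vtx (skeleton g r0 2 2)).
  pose proof HBx as HBx0; destruct HBx0 as [_ [Nx [Lxx _]]]. pose proof (Lxx x Hx) as Lx.
  destruct (Z.eq_dec N1 N2) as [E|E].
  - subst N2. exists 0%nat. split; auto.
    assert (b1 = b2).
    { assert (Hd : dist_le g a z 2).
      { apply walk_dist_le with 2%nat; auto. replace 2%nat with (1+1)%nat by lia.
        apply walk_app with x; apply walk_1; auto. }
      apply blk_eq.
      - exact (block_union g r0 Hs _ _ z a N1 (proj2_sig b2) (proj2_sig b1) Hz Ha (dist_le_sym g Hs _ _ _ Hd) Lz La).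
      - exact (block_union g r0 Hs _ _ a z N1 (proj2_sig b1) (proj2_sig b2) Ha Hz Hd La Lz). }
    subst. apply walk_0.
  - destruct (Z.eq_dec Nx N1) as [E1|E1].
    + subst Nx. assert (Hd : dist_le g a x 2) by (apply walk_dist_le with 1%nat; [apply walk_1|]; auto).
      assert (Hsub : forall y, Bx y -> proj1_sig b1 y).
      { exact (block_union g r0 Hs _ _ a x N1 (proj2_sig b1) HBx Ha Hx Hd La Lx). }
      apply (step1 g r0 b1 b2 x z); auto.
    + destruct (Z.eq_dec Nx N2) as [E2|E2].
      * subst Nx. assert (Hd : dist_le g z x 2) by (apply walk_dist_le with 1%nat; [apply walk_1; apply Hs|]; auto).
        assert (Hsub : forall y, Bx y -> proj1_sig b2 y).
        { exact (block_union g r0 Hs _ _ z x N2 (proj2_sig b2) HBx Hz Hx Hd Lz Lx). }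
        apply (step1 g r0 b1 b2 a x); auto.
      * exfalso. apply layer_iff in La, Lz, Lx.
        destruct La as [ra [Da Ra]]. destruct Lz as [rz [Dz Rz]]. destruct Lx as [rx [Dx Rx']].
        pose proof (dist_adj_bound g Hs r0 a x ra rx Hax Da Dx).
        pose proof (dist_adj_bound g Hs r0 x a rx ra (Hs _ _ Hax) Dx Da).
        pose proof (dist_adj_bound g Hs r0 x z rx rz Hxz Dx Dz).
        pose proof (dist_adj_bound g Hs r0 z x rz rx (Hs _ _ Hxz) Dz Dx).
        lia.
Qed.

Lemma walk_project (g : Graph) r0 (Hs : symmetric_graph g) :
  forall m a c (b1 b2 : vtx (skeleton g r0 2 2)),
  walk_n g a c m -> proj1_sig b1 a -> proj1_sig b2 c ->
  exists n, walk_n (skeleton g r0 2 2) b1 b2 n /\ (2 * n <= m + 1)%nat.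
Proof.
  intros m. induction m as [m IH] using (well_founded_induction lt_wf).
  intros a c b1 b2 Hw Ha Hc.
  destruct m as [|[|m]].
  - apply walk_0_eq in Hw. subst c. exists 0%nat. split; [|lia].
    assert (b1 = b2).
    { destruct (proj2_sig b1) as [_ [N1 [L1 _]]].
      assert (Hd : dist_le g a a 2) by (apply walk_dist_le with 0%nat; [apply walk_0|lia]).
      destruct (proj2_sig b2) as [_ [N2 [L2 _]]]. pose proof (L2 a Hc) as La2.
      pose proof (layer_unique _ _ _ _ _ (L1 a Ha) La2). subst N2.
      apply blk_eq.
      - exact (block_union g r0 Hs _ _ a a N1 (proj2_sig b2) (proj2_sig b1) Hc Ha Hd La2 La2).
      - exact (block_union g r0 Hs _ _ a a N1 (proj2_sig b1) (proj2_sig b2) Ha Hc Hd La2 La2). }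
    subst. apply walk_0.
  - apply walk_S_inv in Hw. destruct Hw as [w [Haw Hw]]. apply walk_0_eq in Hw. subst w.
    destruct (step1 g r0 b1 b2 a c Ha Hc Haw) as [n [Hn Hle]]. exists n. split; auto. lia.
  - apply walk_S_inv in Hw. destruct Hw as [x1 [H1 Hw]].
    apply walk_S_inv in Hw. destruct Hw as [x2 [H2 Hw]].
    destruct (proj2_sig b2) as [_ [N2 [L2 _]]]. pose proof (L2 c Hc) as Lc.
    apply layer_iff in Lc. destruct Lc as [rc [[Wc _] _]].
    destruct (block_exists g r0 Hs x2 (m + rc)%nat) as [B2 [HB2 Hx2]].
    { apply walk_app with c; auto. }
    set (bb := exist _ B2 HB2 : vtx (skeleton g r0 2 2)).
    destruct (step2 g r0 Hs b1 bb a x1 x2 Ha Hx2 H1 H2) as [n0 [W0 Le0]].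
    destruct (IH m ltac:(lia) x2 c bb b2 Hw Hx2 Hc) as [n1 [W1 Le1]].
    exists (n0 + n1)%nat. split; [apply walk_app with bb; auto| lia].
Qed.

Definition near (g : Graph) r0 (X : vtx (skeleton g r0 2 2) -> Prop) (x : vtx g) : Prop :=
  exists (b : vtx (skeleton g r0 2 2)) y, X b /\ proj1_sig b y /\ (y = x \/ adj g y x).

Lemma in_block_walk (g : Graph) r0 (b : vtx (skeleton g r0 2 2)) p q :
  proj1_sig b p -> proj1_sig b q ->
  exists l, chain (adj g) p l /\ last l p = q /\
    forall z, In z l -> exists y, proj1_sig b y /\ (y = z \/ adj g y z).
Proof.
  intros Hp Hq. destruct (proj2_sig b) as [_ [N [_ [K _]]]].
  destruct (kconn_creach g _ p q K Hp Hq) as [l0 [Hc E]].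
  revert p Hp Hc E. induction l0 as [|v l0 IH]; intros p Hp Hc E.
  - exists nil. simpl in *. split; [auto|split; [auto|tauto]].
  - destruct Hc as [[Bp [Bv [n [[[w [Hw [Lw Ew]]] _] Hn2]]]] Hc]. rewrite last_cons_d in E.
    replace 2 with (INR 2) in Hn2 by (simpl; lra). apply INR_le in Hn2.
    destruct (IH v Bv Hc E) as [l [H1 [H2 H3]]].
    assert (Hwn : forall z, In z w -> exists y, proj1_sig b y /\ (y = z \/ adj g y z)).
    { destruct w as [|w1 [|w2 w]]; simpl in *.
      - tauto.
      - intros z [<-|[]]. exists v. subst. auto.
      - intros z [<-|Hz]. exists p. split; auto. tauto.
        destruct Hw as [_ [_ Hw]].
        destruct w; [|simpl in Lw; lia]. destruct Hz as [<-|[]]. exists v. subst. auto. }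
    exists (w ++ l). split; [|split].
    + apply chain_app. subst v. auto.
    + rewrite last_app_d. subst v. auto.
    + intros z Hz. apply in_app_or in Hz. destruct Hz; auto.
Qed.

Lemma chain_walk (g : Graph) a l : chain (adj g) a l -> walk_n g a (last l a) (length l).
Proof. intros; exists l; auto. Qed.

Lemma lift_reach (g : Graph) r0 : forall n (b1 b2 : vtx (skeleton g r0 2 2)) a c,
  walk_n (skeleton g r0 2 2) b1 b2 n -> proj1_sig b1 a -> proj1_sig b2 c -> exists m, walk_n g a c m.
Proof.
  intros n. induction n as [|n IH]; intros b1 b2 a c Hw Ha Hc.
  - apply walk_0_eq in Hw. subst. destruct (in_block_walk g r0 b2 a c Ha Hc) as [l [H1 [H2 _]]].
    subst c. eexists. apply chain_walk; eauto.
  - apply walk_S_inv in Hw. destruct Hw as [b [[_ [x [y [Hx [Hy Hxy]]]]] Hw]].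
    destruct (in_block_walk g r0 b1 a x Ha Hx) as [l [H1 [H2 _]]].
    destruct (IH b b2 y c Hw Hy Hc) as [m Hm].
    exists (length l + (1 + m))%nat. apply walk_app with x.
    + subst x. apply chain_walk; auto.
    + apply walk_app with y; auto. apply walk_1; auto.
Qed.

Lemma near_rdisjoint (g : Graph) r0 (Hs : symmetric_graph g) (M : R) X Y :
  2 <= M -> rdisjoint (skeleton g r0 2 2) M X Y -> rdisjoint g (M + M / 2 - 2) (near g r0 X) (near g r0 Y).
Proof.
  intros HM Hd a' c' [b1 [a [Xb1 [Ha Ea]]]] [b2 [c [Yb2 [Hc Ec]]]].
  destruct (Hd b1 b2 Xb1 Yb2) as [nd [[Wd Md] Hnd]].
  destruct (lift_reach g r0 nd b1 b2 a c Wd Ha Hc) as [m0 Wac].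
  assert (Ha' : exists e1, walk_n g a' a e1 /\ (e1 <= 1)%nat).
  { destruct Ea as [<-|E]; [exists 0%nat; split; [apply walk_0|lia]|exists 1%nat; split; [apply walk_1; apply Hs; auto|lia]]. }
  assert (Hc' : exists e2, walk_n g c c' e2 /\ (e2 <= 1)%nat).
  { destruct Ec as [<-|E]; [exists 0%nat; split; [apply walk_0|lia]|exists 1%nat; split; [apply walk_1; auto|lia]]. }
  destruct Ha' as [e1 [W1 L1]]. destruct Hc' as [e2 [W2 L2]].
  assert (Wr : walk_n g a' c' (e1 + (m0 + e2))).
  { apply walk_app with a; auto. apply walk_app with c; auto. }
  destruct (walk_min _ _ _ _ Wr) as [n0 [Dn0 _]].
  exists n0. split; auto.
  destruct Dn0 as [Wn0 _].
  assert (Wac2 : walk_n g a c (e1 + (n0 + e2))).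
  { apply walk_app with a'; [apply walk_sym; auto|]. apply walk_app with c'; auto. apply walk_sym; auto. }
  destruct (walk_project g r0 Hs _ a c b1 b2 Wac2 Ha Hc) as [n [Wn Ln]].
  pose proof (Md n Wn) as Hle.
  assert (Hi : (2 * nd <= n0 + 3)%nat) by lia.
  apply le_INR in Hi. rewrite mult_INR, plus_INR in Hi. simpl in Hi. lra.
Qed.

Lemma lift_chain (g : Graph) r0 (X : vtx (skeleton g r0 2 2) -> Prop) :
  forall l (b0 : vtx (skeleton g r0 2 2)) a, X b0 ->
  chain (fun u v => adj (skeleton g r0 2 2) u v /\ X v) b0 l -> proj1_sig b0 a ->
  exists l', chain (adj g) a l' /\ proj1_sig (last l b0) (last l' a) /\
    forall z, In z l' -> near g r0 X z.
Proof.
  intros l. induction l as [|b1 l IH]; intros b0 a X0 Hc Ha.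
  - exists nil. simpl. split; auto. split; auto. tauto.
  - destruct Hc as [[[_ [x [y [Hx [Hy Hxy]]]]] X1] Hc].
    destruct (in_block_walk g r0 b0 a x Ha Hx) as [l1 [C1 [E1 N1]]].
    destruct (IH b1 y X1 Hc Hy) as [l2 [C2 [E2 N2]]].
    exists (l1 ++ y :: l2). split; [|split].
    + apply chain_app. split; auto. rewrite E1. simpl. auto.
    + rewrite last_app_d, last_cons_d, last_cons_d. auto.
    + intros z Hz. apply in_app_or in Hz. destruct Hz as [Hz|[<-|Hz]]; auto.
      * destruct (N1 z Hz) as [w [Hw Ew]]. exists b0, w. auto.
      * exists b1, y. auto.
Qed.

Lemma chain_and {T : Type} (Rl : T -> T -> Prop) (Q : T -> Prop) :
  forall l x, chain Rl x l -> (forall z, In z l -> Q z) -> chain (fun u w => Rl u w /\ Q w) x l.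
Proof.
  intros l. induction l as [|y l IH]; intros x Hc HQ; simpl in *; auto.
  destruct Hc. split; [split; auto|apply IH; auto].
Qed.

Lemma rev_chain {T : Type} (Rl : T -> T -> Prop) (Hs : forall u v, Rl u v -> Rl v u) :
  forall l x, chain Rl x l -> exists y m, rev (x :: l) = y :: m /\ chain Rl y m /\ y = last l x /\ last m y = x.
Proof.
  intros l. induction l as [|z l IH]; intros x Hc.
  - exists x, nil. simpl. auto.
  - destruct Hc as [H1 H2]. destruct (IH z H2) as [y [m [E [C [Ey Em]]]]].
    exists y, (m ++ [x]). split; [|split; [|split]].
    + change (rev (x :: z :: l)) with (rev (z :: l) ++ [x]). rewrite E. reflexivity.
    + apply chain_app. split; auto. rewrite Em. simpl. auto.
    + rewrite last_cons_d. auto.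
    + rewrite last_app_d. reflexivity.
Qed.

Lemma path_between_rev (g : Graph) (Hs : symmetric_graph g) X Y q :
  path_between g X Y q -> path_between g Y X (rev q).
Proof.
  destruct q as [|x l]; simpl; [tauto|]. intros [Hc [HX HY]].
  destruct (rev_chain (adj g) Hs l x Hc) as [y [m [E [C [Ey Em]]]]].
  change ((rev l ++ [x])) with (rev (x :: l)). rewrite E. simpl. subst. split; [auto|split; auto]. rewrite Em. auto.
Qed.

Lemma rdisjoint_mono (g : Graph) r X Y X' Y' :
  rdisjoint g r X Y -> (forall z, X' z -> X z) -> (forall z, Y' z -> Y z) -> rdisjoint g r X' Y'.
Proof. intros Hd H1 H2 a b Ha Hb. apply Hd; auto. Qed.

Lemma chain_in {T : Type} (Rl : T -> T -> Prop) :
  forall l x, chain Rl x l -> forall L, (forall z, In z l -> In z L) -> chain (fun u v => Rl u v /\ In v L) x l.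
Proof. intros l x Hc L HL. apply chain_and; auto. Qed.

Lemma main_gen (g : Graph) r0 (H : Graph) (M : R) :
  symmetric_graph g -> symmetric_graph H -> loopless H -> 2 <= M ->
  fat_minor (skeleton g r0 2 2) H M -> fat_minor g H (M + M / 2 - 2).
Proof.
  intros Hs HsH HlH HM [B2 [P2 [HB [HP [HBB [HPP HBP]]]]]].
  set (Bl := fun v => near g r0 (B2 v)).
  assert (Qex : forall u v, exists q, adj H u v -> path_between g (Bl u) (Bl v) q /\
                 forall z, In z q -> near g r0 (inL (P2 u v)) z).
  { intros u v. destruct (classic (adj H u v)) as [Ha|Ha]; [|exists nil; tauto].
    destruct (HP u v Ha) as [_ Hpb]. destruct (P2 u v) as [|b0 l] eqn:Ep; [simpl in Hpb; tauto|].
    destruct Hpb as [Hc [Hu Hv]].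
    destruct (proj2_sig b0) as [[a Ha0] _].
    destruct (lift_chain g r0 (inL (b0 :: l)) l b0 a) as [l' [C' [E' N']]]; auto.
    - left; auto.
    - apply chain_in; auto. intros z Hz; right; auto.
    - exists (a :: l'). intros _. split.
      + simpl. split; auto. split.
        * exists b0, a. auto.
        * exists (last l b0), (last l' a). auto.
      + intros z [<-|Hz]; [exists b0, a; split; [left; auto|auto]|auto]. }
  set (Q := fun u v => proj1_sig (constructive_indefinite_description _ (Qex u v))).
  assert (QP : forall u v, adj H u v -> path_between g (Bl u) (Bl v) (Q u v) /\
                 forall z, In z (Q u v) -> near g r0 (inL (P2 u v)) z).
  { intros u v. exact (proj2_sig (constructive_indefinite_description _ (Qex u v))). }
  clearbody Q.
  set (sel := fun u v : vtx H => epsilon (inhabits (u, v)) (fun p : vtx H * vtx H => p = (u, v) \/ p = (v, u))).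
  assert (sel_sym : forall u v, sel u v = sel v u).
  { intros u v. unfold sel.
    assert (E : (fun p : vtx H * vtx H => p = (u, v) \/ p = (v, u)) = (fun p : vtx H * vtx H => p = (v, u) \/ p = (u, v))).
    { apply functional_extensionality; intros p; apply propositional_extensionality; tauto. }
    rewrite E. f_equal. apply proof_irrelevance. }
  assert (sel_spec : forall u v, sel u v = (u, v) \/ sel u v = (v, u)).
  { intros u v. unfold sel. apply epsilon_spec. exists (u, v); auto. }
  clearbody sel.
  set (P := fun u v => if excluded_middle_informative (sel u v = (u, v)) then Q u v else rev (Q v u)).
  assert (Psym : forall u v, adj H u v -> P v u = rev (P u v)).
  { intros u v Ha. assert (Hne : u <> v) by (intros ->; apply (HlH v); auto).
    unfold P. rewrite (sel_sym v u).
    destruct (excluded_middle_informative (sel u v = (u, v))) as [E|E];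
    destruct (excluded_middle_informative (sel u v = (v, u))) as [E'|E'].
    - rewrite E in E'. inversion E'. congruence.
    - reflexivity.
    - rewrite rev_involutive. reflexivity.
    - destruct (sel_spec u v); congruence. }
  assert (Ppath : forall u v, adj H u v -> path_between g (Bl u) (Bl v) (P u v)).
  { intros u v Ha. unfold P. destruct (excluded_middle_informative _).
    - apply QP; auto.
    - apply path_between_rev; auto. apply QP. apply HsH; auto. }
  assert (Pnear : forall u v, adj H u v -> forall z, In z (P u v) -> near g r0 (inL (P2 u v)) z).
  { intros u v Ha z. unfold P. destruct (excluded_middle_informative _).
    - apply QP; auto.
    - intros Hz. apply in_rev in Hz. destruct (proj2 (QP v u (HsH _ _ Ha)) z Hz) as [b [y [Hb R]]].
      exists b, y. split; auto. unfold inL in *. destruct (HP u v Ha) as [E _]. rewrite E in Hb.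
      apply in_rev; auto. }
  exists Bl, P. split; [|split; [|split; [|split]]].
  -
    intros v. destruct (HB v) as [[b Hb] Hconn]. split.
    + destruct (proj2_sig b) as [[x Hx] _]. exists x. exists b, x. auto.
    + intros a c [b1 [y1 [Hb1 [Hy1 Ea]]]] [b3 [y3 [Hb3 [Hy3 Ec]]]].
      change (creach (fun u w => adj g u w /\ Bl v w) a c).
      apply creach_trans with y1.
      { destruct Ea as [<-|Ea]; [apply creach_refl|]. apply creach_step. split; [apply Hs; auto|].
        exists b1, y1. auto. }
      destruct (Hconn b1 b3 Hb1 Hb3) as [l [Hc El]].
      destruct (lift_chain g r0 (B2 v) l b1 y1 Hb1 Hc Hy1) as [l' [C' [E' N']]].
      apply creach_trans with (last l' y1).
      { exists l'. split; auto. apply chain_and; auto. }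
      rewrite El in E'.
      apply creach_trans with y3.
      { destruct (in_block_walk g r0 b3 _ _ E' Hy3) as [l2 [C2 [E2 N2]]]. exists l2. split; auto.
        apply chain_and; auto. intros z Hz. destruct (N2 z Hz) as [w [Hw Ew]]. exists b3, w. auto. }
      destruct Ec as [<-|Ec]; [apply creach_refl|]. apply creach_step. split; auto.
      exists b3, y3. auto.
  - intros u v Ha. split; auto.
  - intros u w Hne. apply near_rdisjoint; auto.
  - intros u v u' v' Ha Ha' Hn. eapply rdisjoint_mono.
    + apply (near_rdisjoint g r0 Hs M _ _ HM (HPP u v u' v' Ha Ha' Hn)).
    + apply Pnear; auto.
    + apply Pnear; auto.
  - intros w u v Ha Hw1 Hw2. eapply rdisjoint_mono.
    + apply (near_rdisjoint g r0 Hs M _ _ HM (HBP w u v Ha Hw1 Hw2)).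
    + intros z Hz; exact Hz.
    + apply Pnear; auto.
Qed.

Theorem lemma7 (G : Graph) (x0 : vtx G) (lam k : R) (H : Graph) (M : R)
  (r0 : vtx (skeleton G x0 lam k)) :
  symmetric_graph G -> loopless G -> connected_graph G -> unbounded_graph G ->
  symmetric_graph H -> loopless H ->
  1 <= lam -> 1 <= k -> 4 <= M ->
  proj1_sig r0 x0 ->
  coarsely_bottlenecked G ->
  fat_minor (skeleton (skeleton G x0 lam k) r0 2 2) H M ->
  fat_minor (skeleton G x0 lam k) H (M + M / 2 - 2).
Proof.
  intros HsG _ _ _ HsH HlH _ _ HM _ _ Hf.
  apply (main_gen _ r0 H M); auto; [|lra].
  intros b b' [Hne [x [y [Hx [Hy Hxy]]]]]. split; [auto|]. exists y, x. auto.
Qed.
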